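(* Let $X$ be a nonnegative absolutely continuous random variable with pdf $f$ such that $f(t)>0$ for all $t\in(0,r)$, where $r\in(0,\infty]$; let $\overline F(t)=\mathbb P(X>t)$. For $t\ge0$ with $\overline F(t)>0$, let $X_t=[X-t\mid X>t]$ be the residual lifetime with pdf $f_t(x)=f(x+t)/\overline F(t)$, $x>0$, let $H(X_t)=-\mathbb E[\log f_t(X_t)]$ be the residual entropy, $V(X_t)=\mathrm{Var}[\log f_t(X_t)]$ the residual varentropy, and $\lambda(t)=f(t)/\overline F(t)$ the hazard rate. Let $V(X)=\mathrm{Var}[\log f(X)]$ (so $V(X)=V(X_0)$). (i) If there is $v\ge 0$ with $V(X_t)=v$ for all $t\in[0,r)$, then $|H(X_t)+\log\lambda(t)|=\sqrt v$ for all $t\in(0,r)$. (ii) If $c\in\mathbb R$ and $H(X_t)+\log\lambda(t)=c$ for all $t\in(0,r)$, then $$V(X_t)=c^2+\frac{V(X)-c^2}{\overline F(t)}\qquad\text{for all }t\in[0,r).$$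
   Context: $[X\mid B]$ denotes a random variable distributed as $X$ conditional on the event $B$. The convention $0\log0=0$ is used. *)

(* Defs.v *)
From HB Require Import structures.
From mathcomp Require Import all_boot all_order all_algebra.
From mathcomp Require Import all_classical all_reals all_analysis.
Set Implicit Arguments. Unset Strict Implicit. Unset Printing Implicit Defensive.
Import Order.TTheory GRing.Theory Num.Theory.
Import numFieldNormedType.Exports.
Local Open Scope classical_set_scope.
Local Open Scope ring_scope.

Section Lifetime.
Variable R : realType.
Notation leb := (@lebesgue_measure R).

Definition is_pdf (f : R -> R) : Prop :=
  [/\ measurable_fun setT f,
      (forall x, 0 <= f x),
      (forall x, x < 0 -> f x = 0) &
      (\int[leb]_(x in setT) (f x)%:E = 1)%E].

Definition survival (f : R -> R) (t : R) : R :=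
  Rintegral leb `]t, +oo[ f.

Definition resid_pdf (f : R -> R) (t : R) (x : R) : R :=
  f (x + t) / survival f t.

Definition hazard (f : R -> R) (t : R) : R := f t / survival f t.

(* residual entropy H(X_t) = - E[log f_t(X_t)]  (convention 0 log 0 = 0;
   note ln 0 = 0 in mathcomp-analysis) *)
Definition residual_entropy (f : R -> R) (t : R) : R :=
  - Rintegral leb `]0, +oo[
      (fun x => resid_pdf f t x * ln (resid_pdf f t x)).

Definition residual_varentropy (f : R -> R) (t : R) : R :=
  Rintegral leb `]0, +oo[
    (fun x => resid_pdf f t x *
              (ln (resid_pdf f t x) + residual_entropy f t) ^+ 2).

Definition entropy (f : R -> R) : R :=
  - Rintegral leb setT (fun x => f x * ln (f x)).

Definition varentropy (f : R -> R) : R :=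
  Rintegral leb setT (fun x => f x * (ln (f x) + entropy f) ^+ 2).

End Lifetime.

(* Main.v *)
Require Import Defs.
From HB Require Import structures.
From mathcomp Require Import all_boot all_order all_algebra.
From mathcomp Require Import all_classical all_reals all_analysis.
From mathcomp Require Import ring lra.
From mathcomp Require Import measurable_realfun.
Import Order.TTheory GRing.Theory Num.Theory.
Import numFieldNormedType.Exports.
Local Open Scope classical_set_scope.
Local Open Scope ring_scope.
Section S.
Context {R : realType}.
Notation leb := (@lebesgue_measure R).
Local Open Scope ereal_scope.

Lemma leb_shift (t : R) (A : set R) : measurable A ->
  leb ((fun x => x - t)%R @^-1` A) = leb A.
Proof.
move=> mA.
pose phi : measurableTypeR R -> measurableTypeR R := (fun x => x - t)%R.
have mphi : measurable_fun setT phi.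
  by apply: measurable_funB => //; exact: measurable_cst.
pose mu : {measure set (measurableTypeR R) -> \bar R} := pushforward leb phi.
have := @lebesgue_measure_unique R (mu mphi) _ A mA.
rewrite /mu /pushforward /= => ->//.
move=> X [[a b] _ <-] /=; rewrite /phi.

rewrite /pushforward; have -> : (fun x : R => x - t)%R @^-1` `]a, b]%classic = `](a + t)%R, (b + t)%R]%classic.
  apply/seteqP; split => x /=; rewrite !in_itv /= ltrBrDr lerBlDr //.
rewrite !lebesgue_measure_itv /=.
rewrite !lte_fin ltrD2r.
case: ifPn => // _; rewrite -!EFinB; congr EFin; ring.
Qed.

Lemma integral_shift (t : R) (k : R -> R) (D : set R) : measurable D ->
  measurable_fun setT k ->
  \int[leb]_(x in D) (k (x + t)%R)%:E
  = \int[leb]_(x in (fun x => x - t)%R @^-1` D) (k x)%:E.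
Proof.
move=> mD mk.
pose phi : measurableTypeR R -> measurableTypeR R := (fun x => x - t)%R.
have mphi : measurable_fun setT phi.
  by apply: measurable_funB => //; exact: measurable_cst.
have mg : measurable_fun setT (fun y : R => k (y + t)%R).
  apply: measurableT_comp => //.
  by apply: measurable_funD => //; exact: measurable_cst.
rewrite (eq_measure_integral (pushforward leb phi)); last first.
  by move=> A mA _; rewrite /pushforward /phi /=; exact/esym/leb_shift.
rewrite integralE [RHS]integralE.
rewrite !ge0_integral_pushforward //. all: try (by move=> y _; exact: funeneg_ge0). all: try (by move=> y _; exact: funepos_ge0). all: try (apply/measurable_funeneg/measurable_EFinP/measurable_funTS; exact: mg). all: try (apply/measurable_funepos/measurable_EFinP/measurable_funTS; exact: mg).
congr (_ - _); apply: eq_integral => x _;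
  by rewrite /= /phi ?funeposE ?funenegE /= subrK.
all: (apply/measurable_funepos || apply/measurable_funeneg).
all: apply/measurable_EFinP; apply: measurable_funTS; apply: measurableT_comp => //.
all: by apply: measurable_funD => //; exact: measurable_cst.
Qed.

Lemma Rint_shift (t : R) (k : R -> R) : measurable_fun setT k ->
  Rintegral leb `]0%R, +oo[ (fun x => k (x + t)%R) = Rintegral leb `]t, +oo[ k.
Proof.
move=> mk; rewrite /Rintegral integral_shift//; congr fine.
congr integral; apply/seteqP; split => x /=; rewrite !in_itv /= andbT subr_gt0 ?andbT //.
Qed.

End S.

Section T.
Context {R : realType}.
Notation leb := (@lebesgue_measure R).

Let ltr_addl1 (t : R) : t < t + 1. Proof. by rewrite ltrDl. Qed.

Lemma near_gt (a t : R) : a < t -> \forall x \near t, a < x.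
Proof.
move=> at_; have := @near_in_itvoy R a t; rewrite in_itv /= andbT => /(_ at_).
by apply: filterS => x; rewrite in_itv /= andbT.
Qed.

Lemma near_lt (b t : R) : t < b -> \forall x \near t, x < b.
Proof.
move=> tb; have := @near_in_itvNyo R b t; rewrite in_itv /= => /(_ tb).
by apply: filterS => x; rewrite in_itv /=.
Qed.

Lemma tail_split (g : R -> R) (a x : R) : (a <= x)%R ->
  leb.-integrable setT (EFin \o g) ->
  (Rintegral leb `]a, +oo[ g - Rintegral leb `]a, x] g = Rintegral leb `]x, +oo[ g)%R.
Proof.
move=> ax ig; apply: Rintegral_itvB => //.
  by apply: integrableS ig.
Qed.

Lemma tail_derive (g : R -> R) (t : R) : leb.-integrable setT (EFin \o g) ->
  {for t, continuous g} ->
  is_derive t 1 (fun x => Rintegral leb `]x, +oo[ g) (- g t)%R.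
Proof.
move=> ig cg.
pose P := fun x => Rintegral leb [set` Interval (BRight (t - 1)) (BRight x)] g.
have [] := @continuous_FTC1 R g (BRight (t - 1)) t (t + 1)
  (ltr_addl1 t) (integrableS _ _ _ ig) _ cg.
- by [].
- by [].
- by [].
- by rewrite /Order.lt /=; lra.
move=> dP P'.
have iP : is_derive t 1 P (g t) by apply: DeriveDef => //; rewrite -derive1E.
apply: (@near_eq_is_derive _ _ _ (fun x => Rintegral leb `]t - 1, +oo[ g - P x)).
  have := @near_gt (t - 1) t ltac:(lra).
  apply: filterS => x /ltW hx.
  by rewrite /P tail_split.
rewrite -[X in is_derive _ _ _ X]sub0r.
exact: is_deriveB.
Qed.

Lemma near_eq_continuous (h k : R -> R) (t : R) :
  (\forall x \near t, h x = k x) -> {for t, continuous k} -> {for t, continuous h}.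
Proof.
move=> E kc.
have ht : h t = k t by exact: (nbhs_singleton E).
rewrite /prop_for /continuous_at ht.
have E' : {near t, k =1 h} by apply: filterS E => x ->.
exact: (cvg_trans (near_eq_cvg E') kc).
Qed.


Lemma tail_cont (g : R -> R) (t : R) : leb.-integrable setT (EFin \o g) ->
  {for t, continuous (fun x => Rintegral leb `]x, +oo[ g)}.
Proof.
move=> ig.
pose P := fun x => parameterized_integral leb (t - 1) x g.
have h1 : t - 1 <= t + 1 by lra.
have h2 : t - 1 < t + 1 by lra.
have := @parameterized_integral_continuous R (t - 1) (t + 1) g h1
  (integrableS _ _ _ ig).
move=> /(_ _ _ _) /(continuous_within_itvP _ h2) -[] // Pc _ _.
have Pt : {for t, continuous P}.
  by apply: Pc; rewrite in_itv /=; apply/andP; split; lra.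
apply: (@near_eq_continuous _ (fun x => Rintegral leb `]t - 1, +oo[ g - P x)).
  have h3 : t - 1 < t by lra.
  have := @near_gt _ _ h3; apply: filterS => x /ltW hx.
  rewrite -(@tail_split _ (t - 1)) //=; congr (_ - _).
  rewrite /P /parameterized_integral Rintegral_itv_obnd_cbnd //.
  exact: integrableS ig.
apply: cvgB => //; exact: cvg_cst.
Qed.
End T.

Lemma ln_div (R : realType) (x a : R) : 0 < x -> 0 < a -> ln (x / a) = ln x - ln a.
Proof.
move=> x0 a0; rewrite lnM ?posrE ?invr_gt0 // lnV ?posrE //.
Qed.

Section M.
Context {R : realType} (f : R -> R) (pdf : is_pdf f)
  (i2 : (@lebesgue_measure R).-integrable setT (fun x => (f x * ln (f x) ^+ 2)%:E)).
Notation leb := (@lebesgue_measure R).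

Definition f1 x := f x * ln (f x).
Definition f2 x := f x * ln (f x) ^+ 2.

Lemma mf : measurable_fun setT f.
Proof. by case: pdf. Qed.

Lemma f_ge0 x : 0 <= f x.
Proof. by case: pdf => _ + _ _; apply. Qed.

Lemma f_neg x : x < 0 -> f x = 0.
Proof. by case: pdf => _ _ + _; apply. Qed.

Lemma int_f : leb.-integrable setT (EFin \o f).
Proof.
apply/integrableP; split; first by apply/measurable_EFinP; exact: mf.
rewrite (_ : (fun x => `|(EFin \o f) x|)%E = (fun x => (f x)%:E)); last first.
  by apply/funext => x /=; rewrite ger0_norm // f_ge0.
case: pdf => _ _ _ h; suff -> : (\int[leb]_x (f x)%:E = 1)%E by rewrite ltry.
exact: h.
Qed.

Lemma int_f2 : leb.-integrable setT (EFin \o f2).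
Proof. exact: i2. Qed.

Lemma mf1 : measurable_fun setT f1.
Proof. by apply: measurable_funM; [exact: mf | apply: measurableT_comp; [exact: measurable_ln | exact: mf]]. Qed.

Lemma mf2 : measurable_fun setT f2.
Proof. by move/integrableP: int_f2 => [/measurable_EFinP]. Qed.

Lemma int_f1 : leb.-integrable setT (EFin \o f1).
Proof.
apply: (@le_integrable _ _ _ leb setT measurableT _ (EFin \o (fun x => f x + f2 x))).
- by apply/measurable_EFinP; exact: mf1.
- move=> x _ /=; rewrite !lee_fin /f1 /f2.
  have f0 := f_ge0 x.
  rewrite (ger0_norm (x := f x + _)); last first.
    by apply: addr_ge0 => //; apply: mulr_ge0 => //; exact: sqr_ge0.
  rewrite normrM ger0_norm //.
  have : `|ln (f x)| <= 1 + ln (f x) ^+ 2.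
    rewrite -real_normK ?num_real //.
    set m := `|ln (f x)|.
    have : 0 <= (m - 1) ^+ 2 by exact: sqr_ge0.
    have : 0 <= m by exact: normr_ge0.
    nra.
  move=> h; have := ler_wpM2l f0 h; rewrite mulrDr mulr1 //.
- rewrite (_ : EFin \o _ = (EFin \o f) \+ (EFin \o f2))%E; last first.
    by apply/funext => x /=; rewrite EFinD.
  apply: (integrableD measurableT); [exact: int_f | exact: int_f2].
Qed.


Lemma intD_R (D : set R) (g h : R -> R) : measurable D ->
  leb.-integrable D (EFin \o g) -> leb.-integrable D (EFin \o h) ->
  leb.-integrable D (EFin \o (fun y => g y + h y)).
Proof.
move=> mD ig ih.
rewrite (_ : EFin \o _ = (EFin \o g) \+ (EFin \o h))%E; last first.
  by apply/funext => x /=; rewrite EFinD.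
exact: integrableD.
Qed.

Lemma intZ_R (D : set R) (k : R) (g : R -> R) : measurable D ->
  leb.-integrable D (EFin \o g) ->
  leb.-integrable D (EFin \o (fun y => k * g y)).
Proof.
move=> mD ig.
rewrite (_ : EFin \o _ = (fun y => k%:E * (EFin \o g) y))%E; last first.
  by apply/funext => x /=; rewrite EFinM.
exact: integrableZl.
Qed.

Lemma int_lin (D : set R) (a b c : R) : measurable D ->
  leb.-integrable D (EFin \o (fun y => a * f2 y + b * f1 y + c * f y)).
Proof.
move=> mD.
have i0 : forall g, leb.-integrable setT (EFin \o g) -> leb.-integrable D (EFin \o g).
  by move=> g ig; exact: integrableS ig.
apply: intD_R => //; [apply: intD_R => //|]; apply: intZ_R => //; apply: i0.
- exact: int_f2.
- exact: int_f1.
- exact: int_f.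
Qed.

Lemma Rint_lin (D : set R) (a b c : R) : measurable D ->
  Rintegral leb D (fun y => a * f2 y + b * f1 y + c * f y)
  = a * Rintegral leb D f2 + b * Rintegral leb D f1 + c * Rintegral leb D f.
Proof.
move=> mD.
have i0 : forall g, leb.-integrable setT (EFin \o g) -> leb.-integrable D (EFin \o g).
  by move=> g ig; exact: integrableS ig.
rewrite RintegralD //; last 2 first.
- by apply: intD_R => //; apply: intZ_R => //; apply: i0; first [exact: int_f2|exact: int_f1].
- by apply: intZ_R => //; apply: i0; first [exact: int_f2|exact: int_f1|exact: int_f].
rewrite RintegralD //; last 2 first.
- by apply: intZ_R => //; apply: i0; first [exact: int_f2|exact: int_f1].
- by apply: intZ_R => //; apply: i0; first [exact: int_f2|exact: int_f1].
by rewrite !RintegralZl //; apply: i0; first [exact: int_f2|exact: int_f1|exact: int_f].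
Qed.

Lemma m_lin (a b c : R) :
  measurable_fun setT (fun y => a * f2 y + b * f1 y + c * f y).
Proof.
apply: measurable_funD; [apply: measurable_funD|];
  (apply: measurable_funM; [exact: measurable_cst|]).
- exact: mf2.
- exact: mf1.
- exact: mf.
Qed.

Lemma pw_H (a y : R) : 0 < a ->
  (f y / a) * ln (f y / a) = 0 * f2 y + a^-1 * f1 y + (- ln a / a) * f y.
Proof.
move=> a0; rewrite /f1 /f2.
have [fy0|fy0] := eqVneq (f y) 0.
  by rewrite fy0 !mul0r !mulr0 ?mul0r !addr0.
have fyp : 0 < f y by rewrite lt0r fy0 f_ge0.
rewrite ln_div //; field; exact: lt0r_neq0.
Qed.

Lemma pw_V (a e y : R) : 0 < a ->
  (f y / a) * (ln (f y / a) + e) ^+ 2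
  = a^-1 * f2 y + (2 * (e - ln a) / a) * f1 y + ((e - ln a) ^+ 2 / a) * f y.
Proof.
move=> a0; rewrite /f1 /f2.
have [fy0|fy0] := eqVneq (f y) 0.
  by rewrite fy0 !mul0r !mulr0 ?mul0r !addr0.
have fyp : 0 < f y by rewrite lt0r fy0 f_ge0.
rewrite ln_div //; field; exact: lt0r_neq0.
Qed.

Definition G t := Rintegral leb `]t, +oo[ f1.
Definition Hh t := Rintegral leb `]t, +oo[ f2.

Lemma H_eq t : 0 < survival f t ->
  residual_entropy f t = - G t / survival f t + ln (survival f t).
Proof.
move=> a0; rewrite /residual_entropy.
set a := survival f t.
under eq_Rintegral => x _ do rewrite /resid_pdf -/a (pw_H _ _ a0).
rewrite (@Rint_shift _ t (fun y => 0 * f2 y + a^-1 * f1 y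
   + (- ln a / a) * f y)); last exact: m_lin.
rewrite Rint_lin //.
rewrite -/(G t) -/(Hh t) -/(survival f t) -/a.
field; exact: lt0r_neq0.
Qed.

Lemma V_eq t : 0 < survival f t ->
  residual_varentropy f t = Hh t / survival f t - (G t / survival f t) ^+ 2.
Proof.
move=> a0; rewrite /residual_varentropy.
set a := survival f t.
set e := residual_entropy f t.
have eE : e = - G t / a + ln a by rewrite /e H_eq.
under eq_Rintegral => x _ do rewrite /resid_pdf -/a -/e (pw_V _ _ _ a0).
rewrite (@Rint_shift _ t (fun y => a^-1 * f2 y
   + (2 * (e - ln a) / a) * f1 y + ((e - ln a) ^+ 2 / a) * f y)); last exact: m_lin.
rewrite Rint_lin //.
rewrite -/(G t) -/(Hh t) -/(survival f t) -/a eE.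
field; exact: lt0r_neq0.
Qed.

Lemma Rint_pos_T (k : R -> R) : leb.-integrable setT (EFin \o k) ->
  (forall y, y < 0 -> k y = 0) ->
  Rintegral leb `]0, +oo[ k = Rintegral leb setT k.
Proof.
move=> ik k0.
have -> : (setT : set R) = `]-oo, 0] `|` `]0, +oo[.
  apply/seteqP; split => x //= _; rewrite !in_itv /= andbT.
  by case: (lerP x 0) => _; [left|right].
rewrite Rintegral_setU //; last 2 first.
- rewrite (_ : _ `|` _ = setT) //; apply/seteqP; split => x //= _.
  by rewrite !in_itv /= andbT; case: (lerP x 0) => _; [left|right].
- apply/disj_setPS => x [] /=; rewrite !in_itv /= andbT => x0 x1.
  by move: (le_lt_trans x0 x1); rewrite ltxx.
have Z : Rintegral leb `]-oo, 0[ k = 0.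
  under eq_Rintegral => x hx.
    rewrite k0; last by move: hx; rewrite inE /= in_itv.
    over.
  by rewrite Rintegral_cst // mul0r.
rewrite -Rintegral_itv_bndo_bndc; first by rewrite Z add0r.
by apply: integrableS ik.
Qed.

Lemma F0 : survival f 0 = 1.
Proof.
rewrite /survival Rint_pos_T; [|exact: int_f|exact: f_neg].
rewrite /Rintegral.
case: pdf => _ _ _ h.
suff -> : (\int[leb]_(x in setT) (f x)%:E = 1)%E by [].
exact: h.
Qed.

Lemma G0 : Rintegral leb setT f1 = G 0.
Proof.
rewrite /G Rint_pos_T //; first exact: int_f1.
by move=> y y0; rewrite /f1 f_neg // mul0r.
Qed.

Lemma Hh0 : Rintegral leb setT f2 = Hh 0.
Proof.
rewrite /Hh Rint_pos_T //.
by move=> y y0; rewrite /f2 f_neg // mul0r.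
Qed.

Lemma V0 : residual_varentropy f 0 = varentropy f.
Proof.
rewrite V_eq F0 ?ltr01 // !divr1.
rewrite /varentropy.
have eE : entropy f = - G 0 by rewrite /entropy -G0.
rewrite eE.
have -> : (fun x => f x * (ln (f x) + - G 0) ^+ 2) =
  (fun x => 1 * f2 x + (2 * - G 0) * f1 x + (- G 0) ^+ 2 * f x).
  by apply/funext => x; rewrite /f1 /f2; ring.
rewrite Rint_lin // G0 Hh0.
have -> : Rintegral leb setT f = 1.
  by rewrite -(Rint_pos_T _ int_f f_neg) -/(survival f 0) F0.
ring.
Qed.

Lemma cont_f1 t : 0 < f t -> {for t, continuous f} -> {for t, continuous f1}.
Proof.
move=> ft fc.
have h : {for t, continuous (fun x => ln (f x))} := continuous_comp fc (continuous_ln ft).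
exact: (cvgM fc h).
Qed.

Lemma cont_f2 t : 0 < f t -> {for t, continuous f} -> {for t, continuous f2}.
Proof.
move=> ft fc.
have h : {for t, continuous (fun x => ln (f x))} := continuous_comp fc (continuous_ln ft).
exact: (cvgM fc (cvgM h h)).
Qed.

Definition phi x := Hh x - G x * G x / survival f x.

Lemma dphi t : 0 < f t -> {for t, continuous f} -> 0 < survival f t ->
  is_derive t 1 phi (- f t * (ln (f t) - G t / survival f t) ^+ 2).
Proof.
move=> ft fc Ft.
have dF : is_derive t 1 (survival f) (- f t) := tail_derive _ _ int_f fc.
have dG : is_derive t 1 G (- f1 t) := tail_derive _ _ int_f1 (cont_f1 _ ft fc).
have dH : is_derive t 1 Hh (- f2 t) := tail_derive _ _ int_f2 (cont_f2 _ ft fc).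
have := is_deriveB dH (is_deriveM (is_deriveM dG dG) (is_deriveV (lt0r_neq0 Ft) dF)).
have -> : (Hh - G * G * (fun y => (survival f y)^-1)) = phi.
  by apply/funext => x; rewrite /phi !fctE.
move=> h.
set D := (X in is_derive _ _ _ X) in h.
suff -> : - f t * (ln (f t) - G t / survival f t) ^+ 2 = D by [].
have sc : forall a b : R, a *: b = a * b by [].
rewrite /D /f1 /f2 /= !sc.
change ((G * G) t) with (G t * G t).
field; exact: lt0r_neq0.
Qed.

Lemma V_phi t : 0 < survival f t ->
  residual_varentropy f t = phi t / survival f t.
Proof.
move=> Ft; rewrite V_eq // /phi; field; exact: lt0r_neq0.
Qed.

Lemma hz t : 0 < f t -> 0 < survival f t ->
  residual_entropy f t + ln (hazard f t) = ln (f t) - G t / survival f t.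
Proof.
move=> ft Ft; rewrite H_eq // /hazard ln_div //; ring.
Qed.

Lemma F_cont t : {for t, continuous (survival f)}.
Proof. exact: (tail_cont _ _ int_f). Qed.

Lemma phi_cont t : 0 < survival f t -> {for t, continuous phi}.
Proof.
move=> Ft.
have Gc : {for t, continuous G} := tail_cont _ _ int_f1.
have Hc : {for t, continuous Hh} := tail_cont _ _ int_f2.
apply: cvgB; first exact: Hc.
apply: cvgM; first exact: cvgM.
apply: cvgV; first exact: lt0r_neq0.
exact: F_cont.
Qed.

Context (r : \bar R) (r0 : (0 < r)%E)
  (fpos : forall t : R, 0 < t -> (t%:E < r)%E -> 0 < f t)
  (fcont : forall t : R, 0 < t -> (t%:E < r)%E -> {for t, continuous f}).

Lemma near_r t : 0 < t -> (t%:E < r)%E ->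
  \forall x \near t, 0 < x /\ (x%:E < r)%E.
Proof.
move=> t0 tr.
have A := @near_gt _ 0 t t0.
move: r0 tr; case: r => [r1| |] //= _ tr.
- rewrite lte_fin in tr.
  have B := @near_lt _ r1 t tr.
  near=> x; split; [near: x; exact: A | rewrite lte_fin; near: x; exact: B].
- by near=> x; split; [near: x; exact: A | exact: ltry].
Unshelve. all: by end_near. Qed.

Lemma Fpos t : 0 <= t -> (t%:E < r)%E -> 0 < survival f t.
Proof.
move=> t0 tr.
have [s ts sr] : exists2 s, t < s & (s%:E < r)%E.
  move: r0 tr; case: r => [r1| |] //= _ tr.
  - rewrite lte_fin in tr; exists ((t + r1) / 2); first lra.
    rewrite lte_fin; lra.
  - by exists (t + 1); [lra | exact: ltry].
have dF : forall x, x \in `]t, s[ -> is_derive x 1 (survival f) (- f x).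
  move=> x; rewrite in_itv /= => /andP[tx xs].
  have x0 : 0 < x by exact: le_lt_trans t0 tx.
  have xr : (x%:E < r)%E by apply: lt_trans sr; rewrite lte_fin.
  have h : is_derive x 1 (survival f) (- f x) := tail_derive _ _ int_f (fcont _ x0 xr).
  exact: h.
have [c cts E] := MVT ts dF (continuous_in_subspaceT (fun x _ => F_cont x)).
move: cts; rewrite in_itv /= => /andP[tc cs].
have c0 : 0 < c by exact: le_lt_trans t0 tc.
have cr : (c%:E < r)%E by apply: lt_trans sr; rewrite lte_fin.
have fc := fpos _ c0 cr.
have Fs : 0 <= survival f s by apply: Rintegral_ge0 => x _; exact: f_ge0.
have : 0 < f c * (s - t) by apply: mulr_gt0 => //; rewrite subr_gt0.
lra.
Qed.


Lemma dpsi (k t : R) : 0 < t -> (t%:E < r)%E ->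
  is_derive t 1 (fun x => phi x - k * survival f x)
    (- f t * (ln (f t) - G t / survival f t) ^+ 2 - k * - f t).
Proof.
move=> t0 tr.
have ft := fpos _ t0 tr.
have fc := fcont _ t0 tr.
have Ft := Fpos _ (ltW t0) tr.
have dF : is_derive t 1 (survival f) (- f t) := tail_derive _ _ int_f fc.
have := is_deriveB (dphi _ ft fc Ft) (is_deriveZ k dF).
have -> : (phi - k \*: survival f) = (fun x => phi x - k * survival f x).
  by apply/funext => x; rewrite !fctE.
by [].
Qed.

Lemma part_i (v : R) : 0 <= v ->
  (forall t : R, 0 <= t -> (t%:E < r)%E -> residual_varentropy f t = v) ->
  forall t : R, 0 < t -> (t%:E < r)%E ->
    `|residual_entropy f t + ln (hazard f t)| = Num.sqrt v.
Proof.
move=> v0 hv t t0 tr.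
have ft := fpos _ t0 tr.
have Ft := Fpos _ (ltW t0) tr.
rewrite hz //.
have d := dpsi v _ t0 tr.
have : \forall x \near t, phi x - v * survival f x = cst 0 x.
  have := near_r _ t0 tr; apply: filterS => x [x0 xr].
  have Fx := Fpos _ (ltW x0) xr.
  have := hv x (ltW x0) xr; rewrite V_phi // => e.
  rewrite /cst -e; field; exact: lt0r_neq0.
move=> /near_eq_is_derive /(_ d) d0.
have := @derive_val _ _ _ _ _ _ _ d0; rewrite derive_cst => /esym h.
set m := ln (f t) - G t / survival f t.
have m2 : m ^+ 2 = v.
  move: h; rewrite -/m => h.
  have : f t * (v - m ^+ 2) = 0 by rewrite -[RHS]h; ring.
  move/eqP; rewrite mulf_eq0 (gt_eqF ft) /= subr_eq0 => /eqP ->.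
  by [].
by rewrite -m2 sqrtr_sqr.
Qed.

Lemma part_ii (c : R) :
  (forall t : R, 0 < t -> (t%:E < r)%E ->
     residual_entropy f t + ln (hazard f t) = c) ->
  forall t : R, 0 <= t -> (t%:E < r)%E ->
    residual_varentropy f t
      = c ^+ 2 + (varentropy f - c ^+ 2) / survival f t.
Proof.
move=> hc t; rewrite le_eqVlt => /predU1P[<- _|t0 tr].
  by rewrite V0 F0 divr1; ring.
pose psi := fun x => phi x - c ^+ 2 * survival f x.
have d : forall x, x \in `]0, t[ -> is_derive x 1 psi 0.
  move=> x; rewrite in_itv /= => /andP[x0 xt].
  have xr : (x%:E < r)%E by apply: le_lt_trans tr; rewrite lee_fin ltW.
  have := dpsi (c ^+ 2) _ x0 xr.
  have := hc x x0 xr; rewrite hz ?(fpos _ x0 xr) ?(Fpos _ (ltW x0) xr) // => ->.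
  by rewrite (_ : _ - _ = 0) //; ring.
have cont : {within `[0, t], continuous psi}.
  apply: continuous_in_subspaceT => x; rewrite inE /= in_itv /= => /andP[x0 xt].
  have xr : (x%:E < r)%E by apply: le_lt_trans tr; rewrite lee_fin.
  have Fx := Fpos _ x0 xr.
  apply: cvgB; first exact: phi_cont.
  by apply: cvgM; [exact: cvg_cst | exact: F_cont].
have [y _ E] := MVT t0 d cont.
have pt : psi t = psi 0.
  by move: E; rewrite mul0r => /eqP; rewrite subr_eq0 => /eqP.
have Ft := Fpos _ (ltW t0) tr.
have e0 : phi 0 = varentropy f.
  have := V_phi 0; rewrite V0 F0 divr1 => -> //; exact: ltr01.
have ept : phi t = psi t + c ^+ 2 * survival f t by rewrite /psi subrK.
rewrite V_phi // ept pt /psi F0 e0.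
field; exact: lt0r_neq0.
Qed.

End M.

Theorem theorem3p2 (R : realType) (f : R -> R) (r : \bar R) :
  is_pdf f ->
  (0 < r)%E ->
  (forall t : R, 0 < t -> (t%:E < r)%E -> 0 < f t) ->
  (forall t : R, 0 < t -> (t%:E < r)%E -> {for t, continuous f}) ->
  (@lebesgue_measure R).-integrable setT
     (fun x => (f x * ln (f x) ^+ 2)%:E) ->
  (forall v : R, 0 <= v ->
     (forall t : R, 0 <= t -> (t%:E < r)%E -> residual_varentropy f t = v) ->
     forall t : R, 0 < t -> (t%:E < r)%E ->
       `|residual_entropy f t + ln (hazard f t)| = Num.sqrt v)
  /\
  (forall c : R,
     (forall t : R, 0 < t -> (t%:E < r)%E ->
        residual_entropy f t + ln (hazard f t) = c) ->
     forall t : R, 0 <= t -> (t%:E < r)%E ->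
       residual_varentropy f t
         = c ^+ 2 + (varentropy f - c ^+ 2) / survival f t).
Proof.
move=> pdf r0 fpos fcont i2; split.
- exact: (@part_i R f pdf i2 r r0 fpos fcont).
- exact: (@part_ii R f pdf i2 r r0 fpos fcont).
Qed.
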